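(* Assume the setting of the integrated dissipation equalities: $L>0$, $g>0$, $b\in\mathbb{R}$, $v,\theta\in C^2([0,L])$ with $v>0$, $p,q$ continuous on $[0,L]$ satisfying $$p+b\left(2vv'\theta'+v^2\theta''\right)+g\left(vv''-v^2(\theta')^2\right)=0,\qquad q+b\left(vv''-v^2(\theta')^2\right)-g\left(2vv'\theta'+v^2\theta''\right)=0,$$ and $\theta(0)=0$, $v(0)=1$, $\theta'(L)=0$, $v'(L)=0$. Suppose moreover $b\ge 0$ and $p(x)\le 0$, $q(x)\le 0$ for all $x\in[0,L]$. Then $v'(0)\le 0$ (voltage drop). Furthermore, $$\theta'(0)\le 0\iff \frac{b}{g}\int_0^Lp(x)\,dx\le\int_0^Lq(x)\,dx\ (\le 0).$$
   Context: Primes denote $d/dx$. $v$ is voltage amplitude, $\theta$ voltage phase, $p,q$ active/reactive power injections at position $x$ (nonpositive values mean consumption by loads), $g$ conductance and $b$ susceptance per unit length of a straight feeder with transformer at $x=0$. *)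

(* Defs.v *)
From Stdlib Require Import Reals.
From Coquelicot Require Import Coquelicot.
Open Scope R_scope.

Definition has_derive_on_interval (a b : R) (f : R -> R) (x l : R) : Prop :=
  forall eps : R, 0 < eps -> exists delta : R, 0 < delta /\
    forall y : R, a <= y <= b -> y <> x -> Rabs (y - x) < delta ->
      Rabs ((f y - f x) / (y - x) - l) < eps.

Definition continuous_on_interval_at (a b : R) (f : R -> R) (x : R) : Prop :=
  forall eps : R, 0 < eps -> exists delta : R, 0 < delta /\
    forall y : R, a <= y <= b -> Rabs (y - x) < delta ->
      Rabs (f y - f x) < eps.

Definition continuous_on_interval (a b : R) (f : R -> R) : Prop :=
  forall x, a <= x <= b -> continuous_on_interval_at a b f x.

Definition C2_on (a b : R) (f df ddf : R -> R) : Prop :=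
  (forall x, a <= x <= b -> has_derive_on_interval a b f x (df x)) /\
  (forall x, a <= x <= b -> has_derive_on_interval a b df x (ddf x)) /\
  continuous_on_interval a b ddf.

(* Main.v *)
Require Import Defs.
From Stdlib Require Import Reals Lra.
From Coquelicot Require Import Coquelicot.
Open Scope R_scope.

Definition clamp (a b x : R) := Rmax a (Rmin b x).

Lemma clamp_in a b x : a <= b -> a <= clamp a b x <= b.
Proof. intros; unfold clamp, Rmax, Rmin; repeat destruct Rle_dec; lra. Qed.

Lemma clamp_id a b x : a <= x <= b -> clamp a b x = x.
Proof. intros; unfold clamp, Rmax, Rmin; repeat destruct Rle_dec; lra. Qed.

Lemma clamp_lip a b x y : a <= b -> Rabs (clamp a b y - clamp a b x) <= Rabs (y - x).
Proof.
  intros; unfold clamp, Rmax, Rmin; repeat destruct Rle_dec;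
  unfold Rabs; repeat destruct Rcase_abs; lra.
Qed.

Lemma cont_clamp a b f : a <= b -> continuous_on_interval a b f ->
  forall x, continuity_pt (fun y => f (clamp a b y)) x.
Proof.
  intros hab hf x eps he.
  destruct (hf (clamp a b x) (clamp_in a b x hab) eps he) as [d [hd H]].
  exists d; split; [exact hd|].
  intros y [_ hy]. simpl in *. unfold R_dist in *.
  apply H; [apply clamp_in; lra|].
  eapply Rle_lt_trans; [apply clamp_lip; lra| exact hy].
Qed.

Lemma der_int a b f x l : a < x < b -> has_derive_on_interval a b f x l ->
  derivable_pt_lim (fun y => f (clamp a b y)) x l.
Proof.
  intros hx hd eps he.
  destruct (hd eps he) as [d [hd0 H]].
  assert (hp : 0 < Rmin d (Rmin (x - a) (b - x))).
  { repeat apply Rmin_pos; lra. }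
  exists (mkposreal _ hp). intros h hh0 hh. simpl in hh.
  assert (Rabs h < d /\ Rabs h < x - a /\ Rabs h < b - x) as [h1 [h2 h3]].
  { pose proof (Rmin_l d (Rmin (x - a) (b - x))).
    pose proof (Rmin_r d (Rmin (x - a) (b - x))).
    pose proof (Rmin_l (x - a) (b - x)). pose proof (Rmin_r (x - a) (b - x)). lra. }
  assert (hy : a <= x + h <= b).
  { revert h2 h3; unfold Rabs; destruct Rcase_abs; lra. }
  rewrite (clamp_id a b (x+h)) by lra. rewrite (clamp_id a b x) by lra.
  specialize (H (x + h) hy).
  replace (x + h - x) with h in H by ring. apply H; auto.
  intro E; apply hh0; lra.
Qed.

Lemma der_cont a b f x l : has_derive_on_interval a b f x l ->
  continuous_on_interval_at a b f x.
Proof.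
  intros hd eps he.
  destruct (hd 1 Rlt_0_1) as [d [hd0 H]].
  assert (hK : 0 < Rabs l + 1) by (pose proof (Rabs_pos l); lra).
  assert (hp : 0 < Rmin d (eps / (Rabs l + 1))).
  { apply Rmin_pos; [lra| apply Rdiv_lt_0_compat; lra]. }
  exists (Rmin d (eps / (Rabs l + 1))); split; [exact hp|].
  intros y hy hyx.
  pose proof (Rmin_l d (eps / (Rabs l + 1))) as m1.
  pose proof (Rmin_r d (eps / (Rabs l + 1))) as m2.
  destruct (Req_dec y x) as [->|hne].
  { rewrite Rminus_diag, Rabs_R0; lra. }
  assert (hyx0 : y - x <> 0) by lra.
  specialize (H y hy hne ltac:(lra)).
  set (Q := (f y - f x) / (y - x)) in H.
  assert (E : f y - f x = Q * (y - x)) by (unfold Q; field; auto).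
  rewrite E, Rabs_mult.
  assert (Rabs Q <= Rabs l + 1).
  { replace Q with ((Q - l) + l) by ring.
    eapply Rle_trans; [apply Rabs_triang|]. lra. }
  assert (Rabs (y - x) < eps / (Rabs l + 1)) by lra.
  apply Rle_lt_trans with ((Rabs l + 1) * Rabs (y - x)).
  { apply Rmult_le_compat_r; [apply Rabs_pos| lra]. }
  apply Rmult_lt_reg_r with (/ (Rabs l + 1)). apply Rinv_0_lt_compat; lra.
  replace ((Rabs l + 1) * Rabs (y - x) * / (Rabs l + 1)) with (Rabs (y - x)) by (field; lra).
  exact H1.
Qed.

Lemma mono a b F dF : a < b ->
  (forall x, a < x < b -> derivable_pt_lim F x (dF x)) ->
  (forall x, a <= x <= b -> continuity_pt F x) ->
  (forall x, a <= x <= b -> 0 <= dF x) -> F a <= F b.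
Proof.
  intros hab hd hc hpos.
  destruct (MVT_gen F a b dF) as [c [hc1 hc2]].
  - rewrite Rmin_left, Rmax_right by lra. intros; apply is_derive_Reals; auto.
  - rewrite Rmin_left, Rmax_right by lra. auto.
  - rewrite Rmin_left, Rmax_right in hc1 by lra.
    pose proof (hpos c hc1). nra.
Qed.
Theorem mainTheorem5
  (L g b : R) (v dv ddv th dth ddth p q : R -> R)
  (hL : 0 < L) (hg : 0 < g)
  (hv : C2_on 0 L v dv ddv) (hth : C2_on 0 L th dth ddth)
  (hvpos : forall x, 0 <= x <= L -> 0 < v x)
  (hp : continuous_on_interval 0 L p) (hq : continuous_on_interval 0 L q)
  (eqp : forall x, 0 <= x <= L ->
     p x + b * (2 * v x * dv x * dth x + (v x)^2 * ddth x)
         + g * (v x * ddv x - (v x)^2 * (dth x)^2) = 0)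
  (eqq : forall x, 0 <= x <= L ->
     q x + b * (v x * ddv x - (v x)^2 * (dth x)^2)
         - g * (2 * v x * dv x * dth x + (v x)^2 * ddth x) = 0)
  (bc_th0 : th 0 = 0) (bc_v0 : v 0 = 1)
  (bc_dthL : dth L = 0) (bc_dvL : dv L = 0)
  (hb : 0 <= b)
  (hpneg : forall x, 0 <= x <= L -> p x <= 0)
  (hqneg : forall x, 0 <= x <= L -> q x <= 0) :
  dv 0 <= 0 /\
  (dth 0 <= 0 <-> b / g * RInt p 0 L <= RInt q 0 L).
Proof.
  destruct hv as [hv1 [hv2 hv3]]. destruct hth as [ht1 [ht2 ht3]].
  assert (hL0 : 0 <= L) by lra.
  set (D := b * b + g * g).
  assert (hD : 0 < D) by (unfold D; nra).
  assert (keyA : forall x, 0 <= x <= L ->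
     2 * v x * dv x * dth x + (v x)^2 * ddth x = (g/D) * q x - (b/D) * p x).
  { intros x hx. pose proof (eqp x hx) as E1. pose proof (eqq x hx) as E2.
    apply Rmult_eq_reg_l with D; [|lra].
    replace (D * ((g/D) * q x - (b/D) * p x)) with (g * q x - b * p x) by (field; lra).
    unfold D. nra. }
  assert (keyB : forall x, 0 <= x <= L ->
     0 <= v x * ddv x - (v x)^2 * (dth x)^2).
  { intros x hx. pose proof (eqp x hx) as E1. pose proof (eqq x hx) as E2.
    pose proof (hpneg x hx). pose proof (hqneg x hx).
    set (B := v x * ddv x - (v x)^2 * (dth x)^2) in *.
    set (A := 2 * v x * dv x * dth x + (v x)^2 * ddth x) in *.
    assert (D * B = - (g * p x + b * q x)) by (unfold D; nra).
    nra. }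
  set (c := clamp 0 L).
  assert (cid : forall x, 0 <= x <= L -> c x = x) by (intros; apply clamp_id; lra).
  set (vc := fun y => v (c y)). set (dvc := fun y => dv (c y)).
  set (ddvc := fun y => ddv (c y)). set (dthc := fun y => dth (c y)).
  set (ddthc := fun y => ddth (c y)).
  assert (Cv : forall x, continuity_pt vc x).
  { apply cont_clamp; auto. intros y hy. eapply der_cont; eauto. }
  assert (Cdv : forall x, continuity_pt dvc x).
  { apply cont_clamp; auto. intros y hy. eapply der_cont; eauto. }
  assert (Cdth : forall x, continuity_pt dthc x).
  { apply cont_clamp; auto. intros y hy. eapply der_cont; eauto. }
  assert (Dv : forall x, 0 < x < L -> derivable_pt_lim vc x (dv x)).
  { intros; apply der_int; auto; apply hv1; lra. }
  assert (Ddv : forall x, 0 < x < L -> derivable_pt_lim dvc x (ddv x)).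
  { intros; apply der_int; auto; apply hv2; lra. }
  assert (Ddth : forall x, 0 < x < L -> derivable_pt_lim dthc x (ddth x)).
  { intros; apply der_int; auto; apply ht2; lra. }
  split.
  -
    assert (M := mono 0 L (fun y => vc y * dvc y)
              (fun y => dvc y * dvc y + vc y * ddvc y) hL).
    cut (vc 0 * dvc 0 <= vc L * dvc L).
    { unfold vc, dvc. rewrite !cid by lra. rewrite bc_v0, bc_dvL. lra. }
    apply M.
    + intros x hx. pose proof (derivable_pt_lim_mult _ _ _ _ _ (Dv x hx) (Ddv x hx)) as H.
      unfold vc, dvc, ddvc in H |- *. rewrite !cid in H |- * by lra. exact H.
    + intros x hx. apply (continuity_pt_mult vc dvc); auto.
    + intros x hx. unfold vc, dvc, ddvc. rewrite cid by lra.
      pose proof (keyB x hx). nra.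
  - set (pc := fun y => p (c y)). set (qc := fun y => q (c y)).
    assert (Cp : forall x, continuity_pt pc x) by (apply cont_clamp; auto).
    assert (Cq : forall x, continuity_pt qc x) by (apply cont_clamp; auto).
    set (Ac := fun y => (g/D) * qc y - (b/D) * pc y).
    assert (CAc : forall x, continuity_pt Ac x).
    { intro x. apply (continuity_pt_minus (mult_real_fct (g/D) qc) (mult_real_fct (b/D) pc));
      apply continuity_pt_scal; auto. }
    assert (CAc' : forall x, continuous Ac x).
    { intro x. apply continuity_pt_filterlim. auto. }
    assert (exI : forall t, ex_RInt Ac 0 t).
    { intro t. apply (@ex_RInt_continuous R_CompleteNormedModule). intros; auto. }
    set (I := fun t => RInt Ac 0 t).
    assert (DI : forall x, is_derive I x (Ac x)).
    { intro x. apply (is_derive_RInt Ac I 0); [|auto].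
      apply filter_forall. intro t. unfold I. apply (@RInt_correct R_CompleteNormedModule). auto. }
    set (F := fun y => vc y * vc y * dthc y - I y).
    assert (DF : forall x, 0 < x < L -> derivable_pt_lim F x 0).
    { intros x hx.
      pose proof (derivable_pt_lim_mult _ _ _ _ _ (derivable_pt_lim_mult _ _ _ _ _ (Dv x hx) (Dv x hx)) (Ddth x hx)) as H1.
      pose proof (proj1 (is_derive_Reals _ _ _) (DI x)) as H2.
      pose proof (derivable_pt_lim_minus _ _ _ _ _ H1 H2) as H3.
      replace 0 with ((dv x * vc x + vc x * dv x) * dthc x + vc x * vc x * ddth x - Ac x).
      exact H3.
      pose proof (keyA x ltac:(lra)) as K.
      unfold Ac, vc, dthc, qc, pc. rewrite !cid by lra. rewrite <- K. ring. }
    assert (CF : forall x, 0 <= x <= L -> continuity_pt F x).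
    { intros x hx.
      apply (continuity_pt_minus (mult_fct (mult_fct vc vc) dthc) I).
      - apply continuity_pt_mult; auto. apply continuity_pt_mult; auto.
      - apply continuity_pt_filterlim. apply (@ex_derive_continuous R_AbsRing R_NormedModule I x). exists (Ac x). apply DI. }
    assert (M1 : F 0 <= F L) by (apply (mono 0 L F (fun _ => 0)); auto; intros; lra).
    assert (M2 : - F 0 <= - F L).
    { cut ((fun y => - F y) 0 <= (fun y => - F y) L). simpl. lra.
      apply (mono 0 L (fun y => - F y) (fun _ => 0)); auto.
      - intros x hx. replace 0 with (-0) by ring.
        apply (derivable_pt_lim_opp F). auto.
      - intros x hx. apply (continuity_pt_opp F). auto.
      - intros; lra. }
    assert (F0 : F 0 = dth 0).
    { unfold F, I, vc, dthc. rewrite !cid by lra. rewrite bc_v0.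
      replace (RInt Ac 0 0) with 0 by (rewrite RInt_point; reflexivity). ring. }
    assert (FL : F L = - RInt Ac 0 L).
    { unfold F, I, vc, dthc. rewrite !cid by lra. rewrite bc_dthL. ring. }
    assert (Ep : RInt p 0 L = RInt pc 0 L).
    { apply RInt_ext; intros x hx; rewrite Rmin_left, Rmax_right in hx by lra;
      unfold pc; rewrite cid by lra; reflexivity. }
    assert (Eq : RInt q 0 L = RInt qc 0 L).
    { apply RInt_ext; intros x hx; rewrite Rmin_left, Rmax_right in hx by lra;
      unfold qc; rewrite cid by lra; reflexivity. }
    assert (exp : ex_RInt pc 0 L).
    { apply (@ex_RInt_continuous R_CompleteNormedModule). intros; apply continuity_pt_filterlim; auto. }
    assert (exq : ex_RInt qc 0 L).
    { apply (@ex_RInt_continuous R_CompleteNormedModule). intros; apply continuity_pt_filterlim; auto. }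
    assert (EA : RInt Ac 0 L = g/D * RInt qc 0 L - b/D * RInt pc 0 L).
    { transitivity (RInt (fun x => minus (scal (g/D) (qc x)) (scal (b/D) (pc x))) 0 L).
      reflexivity.
      etransitivity; [apply (@RInt_minus R_CompleteNormedModule (fun x => scal (g/D) (qc x)) (fun x => scal (b/D) (pc x)) 0 L)|].
      - exact (@ex_RInt_scal R_NormedModule qc 0 L _ exq).
      - exact (@ex_RInt_scal R_NormedModule pc 0 L _ exp).
      - rewrite (@RInt_scal R_CompleteNormedModule qc) by auto.
        rewrite (@RInt_scal R_CompleteNormedModule pc) by auto. reflexivity. }
    assert (Hd : dth 0 = - (g/D * RInt q 0 L - b/D * RInt p 0 L)).
    { rewrite Ep, Eq, <- EA, <- FL, <- F0. apply Rle_antisym; [exact M1|]. apply Ropp_le_cancel; exact M2. }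
    rewrite Hd. set (P := RInt p 0 L). set (Q := RInt q 0 L).
    assert (E1 : g/D*Q - b/D*P = (g*Q - b*P)/D) by (field; lra).
    assert (E2 : g*Q - b*P = D * ((g*Q - b*P)/D)) by (field; lra).
    assert (E3 : b*P = g*(b/g*P)) by (field; lra).
    rewrite E1. split; intro H.
    + assert (0 <= (g*Q - b*P)/D) by lra.
      assert (0 <= D * ((g*Q - b*P)/D)) by (apply Rmult_le_pos; lra).
      apply Rmult_le_reg_l with g; [exact hg|]. lra.
    + assert (g * (b/g*P) <= g * Q) by (apply Rmult_le_compat_l; lra).
      assert (0 <= (g*Q - b*P)/D) by (apply Rdiv_le_0_compat; lra).
      lra.
Qed.
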